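(* Let $q$ be a prime power, $6\le n\le q$, $\alpha_1,\dots,\alpha_n\in\mathbb{F}_q$ distinct, $u_1,\dots,u_n\in\mathbb{F}_q^*$, and $H\in\mathbb{F}_q^{5\times n}$ with $H_{ab}=u_b\alpha_b^{a-1}$ (so $\ker H$ has distance $6$). Then the number of $e\in\mathbb{F}_q^n$ with $|e|=3$ for which there exists $e'\in\mathbb{F}_q^n$, $e'\ne e$, $|e'|\le 3$, $He'=He$, is at most $$\frac{(n-3)(n-4)(n-5)}{6(q-1)^2}\cdot(q-1)^3\binom{n}{3}.$$
   Context: $|e|$ denotes the Hamming weight of $e\in\mathbb{F}_q^n$. *)

(* Defs.v *)
From mathcomp Require Import all_boot all_order all_algebra.
Set Implicit Arguments. Unset Strict Implicit. Unset Printing Implicit Defensive.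
Import Order.TTheory GRing.Theory Num.Theory.
Local Open Scope ring_scope.

Definition hwt (F : fieldType) (n : nat) (e : 'cV[F]_n) : nat :=
  #|[set i : 'I_n | e i ord0 != 0]|.

(* The 5 x n parity-check matrix H_{ab} = u_b * alpha_b^(a-1) (rows indexed from 0) *)
Definition grsH (F : fieldType) (n : nat) (alpha u : 'I_n -> F) : 'M[F]_(5, n) :=
  \matrix_(a < 5, b < n) (u b * alpha b ^+ a).

(* Main.v *)
Require Import Defs.
From mathcomp Require Import all_boot all_order all_algebra.
From mathcomp Require Import zify ring lra.
Set Implicit Arguments. Unset Strict Implicit. Unset Printing Implicit Defensive.
Import Order.TTheory GRing.Theory Num.Theory.
Local Open Scope ring_scope.

Definition supp (F : fieldType) n (e : 'cV[F]_n) := [set i : 'I_n | e i ord0 != 0].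

Lemma hwtE (F : fieldType) n (e : 'cV[F]_n) : hwt e = #|supp e|.
Proof. by []. Qed.

Lemma kerH (F : fieldType) n (alpha u : 'I_n -> F) (x : 'cV[F]_n) :
  injective alpha -> (forall b, u b != 0) ->
  grsH alpha u *m x = 0 -> (hwt x <= 5)%N -> x = 0.
Proof.
move=> ainj unz Hx wx; apply/matrixP => j k; rewrite (ord1 k) mxE.
case: (boolP (j \in supp x)); last by rewrite inE negbK => /eqP.
move=> jS.
pose s := [seq alpha i | i <- enum (supp x :\ j)].
pose p := \prod_(a <- s) ('X - a%:P).
have sp : (size p <= 5)%N.
  rewrite size_prod_XsubC size_map -cardE.
  move: wx; rewrite hwtE (cardsD1 j (supp x)) jS; lia.
have Hsum : \sum_b x b ord0 * (u b * p.[alpha b]) = 0.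
  transitivity (\sum_(a < 5) p`_a * (grsH alpha u *m x) a ord0).
    under eq_bigr => b _ do rewrite (horner_coef_wide _ sp) mulr_sumr mulr_sumr.
    rewrite exchange_big /=; apply: eq_bigr => a _.
    rewrite mxE mulr_sumr; apply: eq_bigr => b _; rewrite /grsH mxE; ring.
  by rewrite Hx; under eq_bigr do rewrite mxE mulr0; rewrite big1.
rewrite (bigD1 j) //= big1 ?addr0 in Hsum; last first.
  move=> b bj; case: (boolP (b \in supp x)) => bS; last first.
    move: bS; rewrite inE negbK => /eqP ->.
    by rewrite mul0r.
  have : root p (alpha b) by rewrite root_prod_XsubC; apply: map_f; rewrite mem_enum in_setD1 bj bS.
  by move/eqP => ->; rewrite !mulr0.
have : ~~ root p (alpha j).
  by rewrite root_prod_XsubC (mem_map ainj) mem_enum !inE eqxx.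
move=> /negbTE nr; move: Hsum => /eqP; rewrite !mulf_eq0 (negbTE (unz j)) /=.
by rewrite -/(root p (alpha j)) nr orbF => /eqP.
Qed.

Lemma wit (F : fieldType) n (alpha u : 'I_n -> F) (e e' : 'cV[F]_n) :
  injective alpha -> (forall b, u b != 0) ->
  hwt e = 3%N -> (hwt e' <= 3)%N -> e' != e -> grsH alpha u *m e' = grsH alpha u *m e ->
  #|supp e'| = 3%N /\ supp e :&: supp e' = set0.
Proof.
move=> ainj unz we we' ne He.
have c0 : grsH alpha u *m (e - e') = 0 by rewrite mulmxBr He subrr.
have cn : e - e' != 0 by rewrite subr_eq0 eq_sym.
have w6 : (6 <= hwt (e - e'))%N.
  rewrite ltnNge; apply/negP => h; move/eqP: cn; apply; exact: kerH c0 h.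
have sub : supp (e - e') \subset supp e :|: supp e'.
  apply/subsetP => i; rewrite !inE !mxE; apply: contraR.
  by rewrite negb_or !negbK => /andP[/eqP-> /eqP->]; rewrite subrr.
have := subset_leq_card sub; have := cardsUI (supp e) (supp e').
move: w6 we we'; rewrite !hwtE => w6 we we' h1 h2.
have h3 : #|supp e :&: supp e'| = 0%N by lia.
split; first by lia.
by apply/eqP; rewrite -cards_eq0 h3.
Qed.

Lemma disj_out (T : finType) (A B : {set T}) i : A :&: B = set0 -> i \in A -> i \notin B.
Proof.
move=> h iA; apply/negP => iB.
have : i \in A :&: B by rewrite inE iA iB.
by rewrite h inE.
Qed.

Lemma suppN (F : fieldType) n (x : 'cV[F]_n) i : i \notin supp x -> x i ord0 = 0.
Proof. by rewrite inE negbK => /eqP. Qed.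

Lemma count_pairs n :
  #|[set x : {set 'I_n} * {set 'I_n} | [&& #|x.1| == 3%N, x.2 \subset ~: x.1 & #|x.2| == 3%N]]|
  = ('C(n,3) * 'C(n-3,3))%N.
Proof.
rewrite -sum1_card.
rewrite (eq_bigl (fun x : {set 'I_n} * {set 'I_n} => (#|x.1| == 3%N) && ((x.2 \subset ~: x.1) && (#|x.2| == 3%N)))); last first.
  by move=> x; rewrite inE.
rewrite -(@pair_big_dep _ _ _ _ _ (fun T : {set 'I_n} => #|T| == 3%N)
   (fun T (T' : {set 'I_n}) => (T' \subset ~: T) && (#|T'| == 3%N)) (fun _ _ => 1%N)) /=.
rewrite (eq_bigr (fun _ => 'C(n-3,3))); last first.
  move=> T /eqP T3; rewrite sum1_card.
  transitivity #|[set T' : {set 'I_n} | T' \subset ~: T & #|T'| == 3%N]|.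
    by apply: eq_card => T'; rewrite !inE.
  by rewrite cards_draws cardsCs setCK card_ord T3.
rewrite (eq_bigl (fun T => T \in [set T : {set 'I_n} | #|T| == 3%N])); last first.
  by move=> T; rewrite inE.
by rewrite sum_nat_const card_draws card_ord mulnC.
Qed.

Theorem mainTheorem11 (F : finFieldType) (n : nat)
  (alpha u : 'I_n -> F) :
  (6 <= n)%N -> (n <= #|F|)%N ->
  injective alpha -> (forall b, u b != 0) ->
  let q := #|F| in
  let H := grsH alpha u in
  ((#|[set e : 'cV[F]_n | (hwt e == 3)%N &&
        [exists e' : 'cV[F]_n, [&& e' != e, (hwt e' <= 3)%N & H *m e' == H *m e]]]|)%:R
     : rat)
  <= ((n - 3) * (n - 4) * (n - 5))%:R / (6 * (q - 1) ^ 2)%:R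
       * ((q - 1) ^ 3 * 'C(n, 3))%:R.
Proof.
move=> n6 nq ainj unz; cbv zeta; set q := #|F|; set H := grsH alpha u.
set E := [set e : 'cV[F]_n | _].
have i0 : 'I_n := Ordinal (leq_trans (isT : (0 < 6)%N) n6).
pose P (e e' : 'cV[F]_n) := [&& e' != e, (hwt e' <= 3)%N & H *m e' == H *m e].
pose w e := odflt e [pick e' | P e e'].
pose t0 (T : {set 'I_n}) := odflt i0 [pick i in T].
pose f e := (supp e, supp (w e), e (t0 (supp e)) ord0).
have EP : forall e, e \in E -> [/\ hwt e = 3%N, P e (w e), #|supp (w e)| = 3%N,
     supp e :&: supp (w e) = set0 & t0 (supp e) \in supp e].
  move=> e; rewrite inE => /andP[/eqP we /existsP ex].
  have Pw : P e (w e).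
    rewrite /w; case: pickP => [//|h]; case: ex => e' He'; by have := h e'; rewrite /P He'.
  move: (Pw) => /and3P[ne w3 /eqP HH]; have [c d] := wit ainj unz we w3 ne HH.
  split => //; rewrite /t0; case: pickP => [//|h].
  by move: we; rewrite hwtE (eq_card0 h).
have finj : {in E &, injective f}.
  move=> e1 e2 E1 E2 [T12 T12' v12].
  have [we1 P1 c1 d1 t1] := EP _ E1; have [we2 P2 c2 d2 t2] := EP _ E2.
  move: P1 P2 => /and3P[_ _ /eqP H1] /and3P[_ _ /eqP H2].
  rewrite -T12 in v12.
  set t := t0 (supp e1) in v12 t1.
  pose d := (e1 - w e1) - (e2 - w e2).
  have Hd : grsH alpha u *m d = 0 by rewrite !mulmxBr -/H H1 H2 !subrr ?subr0.
  have sd : supp d \subset (supp e1 :|: supp (w e1)) :\ t.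
    apply/subsetP => i; rewrite !inE !mxE.
    case: (eqVneq i t) => [->|nit] /=.
      rewrite (suppN (disj_out d1 t1)) (suppN (disj_out d2 _)) -?T12 // v12.
      by rewrite !subr0 subrr eqxx.
    apply: contraR; rewrite negb_or !negbK => /andP[/eqP a /eqP b].
    have a' : e2 i ord0 = 0 by apply: suppN; rewrite -T12 inE a eqxx.
    have b' : w e2 i ord0 = 0 by apply: suppN; rewrite -T12' inE b eqxx.
    by rewrite a b a' b' !subr0.
  have d0 : d = 0.
    apply: kerH ainj unz Hd _; rewrite hwtE (leq_trans (subset_leq_card sd)) //.
    have h6 : #|supp e1 :|: supp (w e1)| = 6%N.
      by have := cardsUI (supp e1) (supp (w e1)); rewrite d1 cards0 addn0 c1 -hwtE we1.
    by have := cardsD1 t (supp e1 :|: supp (w e1)); rewrite inE t1 h6 /= add1n => -[<-].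
  apply/matrixP => i k; rewrite (ord1 k).
  have := congr1 (fun M : 'cV[F]_n => M i ord0) d0; rewrite /d !mxE.
  case: (boolP (i \in supp (w e1))) => iW.
    have iE : i \notin supp e1 by apply: (disj_out (A := supp (w e1))); rewrite // setIC.
    by rewrite (suppN iE) (suppN (_ : i \notin supp e2)) // -T12.
  rewrite (suppN iW) (suppN (_ : i \notin supp (w e2))) -?T12' //.
  by rewrite !subr0 => /eqP; rewrite subr_eq0 => /eqP.
have card1 : (#|E| <= 'C(n,3) * 'C(n-3,3) * (q-1))%N.
  rewrite -(card_in_imset finj).
  pose D12 := [set x : {set 'I_n} * {set 'I_n} | [&& #|x.1| == 3%N, x.2 \subset ~: x.1 & #|x.2| == 3%N]].
  pose D := setX D12 [set~ (0:F)].
  have sub : f @: E \subset D.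
    apply/subsetP => _ /imsetP[e Ee ->]; have [we Pw c dd tt] := EP _ Ee.
    rewrite !inE /= -hwtE we c !eqxx /= andbT; apply/andP; split.
      by apply/subsetP => i iW; rewrite inE; apply: (disj_out (A := supp (w e))); rewrite // setIC.
    by move: tt; rewrite inE.
  rewrite (leq_trans (subset_leq_card sub)) // cardsX cardsC1 count_pairs.
  by rewrite /q subn1.
have qpos : (0 < q - 1)%N by rewrite /q; lia.
have h6 : ('C(n-3,3) * 6 = (n-3)*(n-4)*(n-5))%N.
  rewrite (_ : 6 = 3`!)%N // bin_ffact !ffactnS ffactn0.
  have -> : (n - 3).-1 = (n - 4)%N by lia.
  have -> : (n - 4).-1 = (n - 5)%N by lia.
  by rewrite muln1 mulnA.
apply: le_trans (_ : (('C(n,3) * 'C(n-3,3) * (q-1))%N%:R : rat) <= _).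
  by rewrite ler_nat.
rewrite -h6.
have q0 : ((q - 1)%N%:R : rat) != 0 by rewrite pnatr_eq0 -lt0n.
have -> : (('C(n - 3, 3) * 6)%N%:R / (6 * (q - 1) ^ 2)%N%:R * ((q - 1) ^ 3 * 'C(n, 3))%N%:R : rat)
   = ('C(n, 3) * 'C(n - 3, 3) * (q - 1))%N%:R.
  rewrite !natrM; by field.
done.
Qed.
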